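(* Let $s\ge 0$ and $d\ge1$, and let $(\delta_1,\ldots,\delta_s,\delta_{s+1})$ and $(e_1,\ldots,e_s)$ be sequences of integers with $\delta_i\neq e_j$ for all $i,j$, satisfying $0<\delta_1\le\cdots\le\delta_s\le\delta_{s+1}=d$, $0\le e_1\le\cdots\le e_s<d$, and $e_j<\delta_j$ for $1\le j\le s$. Let $n=\sum_{j=1}^{s+1}\delta_j-\sum_{j=1}^{s}e_j$. Then there is a forest $\Delta$ on $[n]$ of dimension $d-1$ whose $f$-vector $(f_0,\ldots,f_{d-1})$ satisfies $$\sum_{i=0}^{d} f_{i-1}x^i=\sum_{j=1}^{s+1}(1+x)^{\delta_j}-\sum_{j=1}^{s}(1+x)^{e_j},$$ where $f_{-1}=1$.
   Context: A simplicial complex $\Delta$ on $[n]$ is a collection of subsets of $[n]$ containing all singletons $\{i\}$, $i\in[n]$, and closed under taking subsets; $\dim\Delta=d-1$ where $d$ is the maximal face size; facets are maximal faces; $f_i$ is the number of faces with $i+1$ elements. For facets $F_{i_1},\ldots,F_{i_q}$, $\langle F_{i_1},\ldots,F_{i_q}\rangle$ is the subcomplex of all faces contained in some $F_{i_j}$. A facet $F$ of a complex is a leaf if there is another facet $G\neq F$ with $H\cap F\subset G\cap F$ for all facets $H\neq F$ (a complex with a single facet is regarded as having that facet as a leaf). A forest is a simplicial complex such that for every nonempty subset $\{F_{i_1},\ldots,F_{i_q}\}$ of its facets, $\langle F_{i_1},\ldots,F_{i_q}\rangle$ has a leaf. *)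

(* Defs.v *)
From HB Require Import structures.
From mathcomp Require Import all_boot all_order all_algebra.
Set Implicit Arguments. Unset Strict Implicit. Unset Printing Implicit Defensive.
Import Order.TTheory GRing.Theory Num.Theory.

Definition simplicial_complex (n : nat) (D : {set {set 'I_n}}) : Prop :=
  (forall i : 'I_n, [set i] \in D) /\
  (forall F G : {set 'I_n}, F \in D -> G \subset F -> G \in D).

(* maximal face size d, i.e. dim D = d - 1 *)
Definition max_face_size (n : nat) (D : {set {set 'I_n}}) (d : nat) : Prop :=
  (exists2 F, F \in D & #|F| = d) /\ (forall F, F \in D -> #|F| <= d).

Definition facets (n : nat) (D : {set {set 'I_n}}) : {set {set 'I_n}} :=
  [set F in D | [forall G in D, (F \subset G) ==> (G == F)]].

Definition gen_complex (n : nat) (S : {set {set 'I_n}}) : {set {set 'I_n}} :=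
  [set G : {set 'I_n} | [exists F in S, G \subset F]].

Definition is_leaf (n : nat) (D : {set {set 'I_n}}) (F : {set 'I_n}) : Prop :=
  F \in facets D /\
  (facets D = [set F] \/
   exists2 G, G \in facets D &
     G != F /\ (forall H, H \in facets D -> H != F -> H :&: F \subset G :&: F)).

Definition has_leaf (n : nat) (D : {set {set 'I_n}}) : Prop :=
  exists F, is_leaf D F.

Definition forest (n : nat) (D : {set {set 'I_n}}) : Prop :=
  forall S : {set {set 'I_n}}, S \subset facets D -> S != set0 ->
    has_leaf (gen_complex S).

Definition fnum (n : nat) (D : {set {set 'I_n}}) (i : nat) : nat :=
  #|[set F in D | #|F| == i.+1]|.

(* f_{i-1}, with the convention f_{-1} = 1 *)
Definition fshift (n : nat) (D : {set {set 'I_n}}) (i : nat) : nat :=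
  if i is i'.+1 then fnum D i' else 1.

(* Main.v *)
Require Import Defs.
From HB Require Import structures.
From mathcomp Require Import all_boot all_order all_algebra.
From mathcomp Require Import zify.
Import Order.TTheory GRing.Theory Num.Theory.
Set Implicit Arguments. Unset Strict Implicit. Unset Printing Implicit Defensive.

Lemma card_int n a b : b <= n -> #|[set i : 'I_n | a <= i < b]| = b - a.
Proof.
elim: b => [|b IH] bn.
  by apply: eq_card0 => i; rewrite inE ltn0 andbF.
have bn' : b < n by [].
case: (leqP a b) => ab.
  have -> : [set i : 'I_n | a <= i < b.+1] = (Ordinal bn') |: [set i : 'I_n | a <= i < b].
    apply/setP => i; rewrite !inE -val_eqE /=.
    case: (ltngtP i b) => ib; rewrite ?ltnS.
    - by rewrite (ltnW ib) andbT.
    - by rewrite [i <= b]leqNgt ib andbF.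
    - by rewrite ib ab leqnn.
  rewrite cardsU1 inE /= ltnn andbF IH ?(ltnW bn') //.
  by rewrite subSn.
have -> : b.+1 - a = 0 by apply/eqP; rewrite subn_eq0.
apply: eq_card0 => i; rewrite inE. apply/negbTE; apply/negP => /andP [h1 h2].
have := leq_ltn_trans h1 h2. by rewrite ltnS leqNgt ab.
Qed.

Section Lsub_sec.
Local Open Scope ring_scope.
Lemma Lsub (R : comNzRingType) (T : finType) (X : {set T}) (x : R) :
  \sum_(G : {set T}) (G \subset X)%:R * x ^+ #|G| = (1 + x) ^+ #|X|.
Proof.
have -> : ((1 + x) ^+ #|X| = \prod_(i in X) (1 + x)) by rewrite prodr_const.
rewrite [RHS]big_mkcond /=.
rewrite (eq_bigr (fun i => (if i \in X then x else 0) + 1)); last first.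
  by move=> i _; case: (i \in X); [rewrite addrC | rewrite add0r].
rewrite bigA_distr.
apply: eq_big => // G _.
case: (boolP (G \subset X)) => GX.
  rewrite mul1r -prodr_const [LHS]big_mkcond; apply: eq_bigr => i _.
  by case: (boolP (i \in G)) => // iG; rewrite (subsetP GX i iG).
rewrite mul0r. case/subsetPn: GX => i iG iX.
by rewrite (bigD1 i) //= iG (negbTE iX) mul0r.
Qed.
End Lsub_sec.

Lemma facets_sub n (T : {set {set 'I_n}}) : facets (gen_complex T) \subset T.
Proof.
apply/subsetP => F; rewrite inE => /andP [FD /forallP Fmax].
move: (FD); rewrite inE => /existsP [X /andP [XT FX]].
have XD : X \in gen_complex T by rewrite inE; apply/existsP; exists X; rewrite XT subxx.
by move: (Fmax X); rewrite XD FX /= => /eqP <-.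
Qed.

Lemma facets_anti n (D : {set {set 'I_n}}) F G :
  F \in facets D -> G \in facets D -> F \subset G -> F = G.
Proof.
rewrite !inE => /andP [_ /forallP Fmax] /andP [GD _] FG.
by move: (Fmax G); rewrite GD FG /= => /eqP.
Qed.

Lemma facets_gen_anti n (S : {set {set 'I_n}}) :
  (forall F G, F \in S -> G \in S -> F \subset G -> F = G) ->
  facets (gen_complex S) = S.
Proof.
move=> anti; apply/eqP; rewrite eqEsubset facets_sub /=.
apply/subsetP => F FS; rewrite inE; apply/andP; split.
  by rewrite inE; apply/existsP; exists F; rewrite FS subxx.
apply/forallP => G; apply/implyP => GD; apply/implyP => FG.
move: GD; rewrite inE => /existsP [X /andP [XS GX]].
have FX := anti F X FS XS (subset_trans FG GX).
by rewrite eqEsubset FG FX GX.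
Qed.

Section Constr.
Variables (s d n : nat) (delta e : nat -> nat).
Hypothesis hd : 1 <= d.
Hypothesis hde : forall j, j < s -> e j < delta j.
Hypothesis hdd : forall j, j <= s -> delta j <= d.

Definition off j := d + \sum_(k < j) (delta k - e k).
Hypothesis hn : off s = n.

Lemma off_S j : off j.+1 = off j + (delta j - e j).
Proof. by rewrite /off big_ord_recr addnA. Qed.

Lemma off_mono j k : j <= k -> off j <= off k.
Proof.
move/subnK <-; elim: (k - j) => // m IH.
by rewrite addSn off_S; apply: leq_trans IH (leq_addr _ _).
Qed.

Lemma off0 : off 0 = d.
Proof. by rewrite /off big_ord0 addn0. Qed.

Lemma d_le_off j : d <= off j.
Proof. by rewrite -{1}off0; apply: off_mono. Qed.

Lemma off_le_n j : j <= s -> off j <= n.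
Proof. by move=> js; rewrite -hn; apply: off_mono. Qed.

Lemma hed j : j < s -> e j < d.
Proof. move=> js; apply: leq_trans (hde js) (hdd (ltnW js)). Qed.

Lemma d_le_n : d <= n.
Proof. by rewrite -hn d_le_off. Qed.

Definition Bs : {set 'I_n} := [set i : 'I_n | i < d].
Definition As j : {set 'I_n} := [set i : 'I_n | i < e j].
Definition Ns j : {set 'I_n} := [set i : 'I_n | off j <= i < off j.+1].
Definition Fs j := As j :|: Ns j.
Definition Tset : {set {set 'I_n}} := Bs |: [set Fs (val j) | j : 'I_s].
Definition Dc := gen_complex Tset.

Lemma card_Bs : #|Bs| = d.
Proof.
rewrite -(subn0 d) -(card_int 0 d_le_n); apply: eq_card => i.
by rewrite !inE.
Qed.

Lemma card_As j : j < s -> #|As j| = e j.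
Proof.
move=> js; rewrite -(subn0 (e j)) -(card_int 0 (ltnW (leq_trans (hed js) d_le_n))).
by apply: eq_card => i; rewrite !inE.
Qed.

Lemma card_Fs j : j < s -> #|Fs j| = delta j.
Proof.
move=> js.
have h0 : As j :&: Ns j = set0.
  apply/setP => i; rewrite !inE; apply/negbTE; apply/negP => /and3P [h1 h2 _].
  have := leq_trans (d_le_off j) h2; rewrite leqNgt.
  by rewrite (ltn_trans h1 (hed js)).
rewrite cardsU h0 cards0 subn0 card_As // /Ns card_int ?off_le_n // off_S addKn.
by rewrite subnKC // ltnW // hde.
Qed.

Lemma inNs_ge i j : i \in Ns j -> d <= i.
Proof. by rewrite inE => /andP [h _]; apply: leq_trans (d_le_off j) h. Qed.

Lemma As_sub_Bs j : j < s -> As j \subset Bs.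
Proof.
move=> js; apply/subsetP => i; rewrite !inE => h.
by apply: ltn_trans h (hed js).
Qed.

Lemma As_mono j k : e j <= e k -> As j \subset As k.
Proof. by move=> h; apply/subsetP => i; rewrite !inE => h'; apply: leq_trans h' h. Qed.

Lemma FsB i j : i \in Fs j -> i < d -> i \in As j.
Proof.
rewrite inE => /orP [//|/inNs_ge h1 h2].
by move: (leq_trans h2 h1); rewrite ltnn.
Qed.

Lemma Ns_disj i j k : j < k -> i \in Ns j -> i \in Ns k -> False.
Proof.
move=> jk; rewrite !inE => /andP [_ h1] /andP [h2 _].
have := leq_trans (off_mono jk) h2.
by rewrite leqNgt h1.
Qed.

Lemma FsI i j k : j < s -> k < s -> k != j -> i \in Fs k -> i \in Fs j -> i \in As j.
Proof.
move=> js ks kj iFk; rewrite inE => /orP [//|iNj].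
have di := inNs_ge iNj.
move: iFk; rewrite inE => /orP [|iNk].
  rewrite inE => h; move: (leq_trans (ltn_trans h (hed ks)) di); by rewrite ltnn.
case: (ltngtP j k) => jk.
- by case: (Ns_disj jk iNj iNk).
- by case: (Ns_disj jk iNk iNj).
- by move: kj; rewrite jk eqxx.
Qed.

Lemma memT X : X \in Tset -> X = Bs \/ exists2 k : 'I_s, X = Fs k & true.
Proof.
rewrite !inE => /orP [/eqP ->|/imsetP [k _ ->]]; first by left.
by right; exists k.
Qed.

Lemma memD G : (G \in Dc) = (G \subset Bs) || [exists j : 'I_s, G \subset Fs j].
Proof.
rewrite /Dc /gen_complex inE; apply/existsP/orP.
  move=> [X /andP [XT GX]]; case: (memT XT) => [XB|[k XF _]].
    by left; rewrite -XB.
  by right; apply/existsP; exists k; rewrite -XF.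
move=> [GB|/existsP [k Gk]].
  by exists Bs; rewrite GB andbT !inE eqxx.
exists (Fs k); rewrite Gk andbT !inE; apply/orP; right.
by apply/imsetP; exists k.
Qed.

Lemma find_block m t : d <= m -> m < off t -> exists2 j, j < t & off j <= m < off j.+1.
Proof.
move=> dm; elim: t => [|t IH].
  by rewrite off0 ltnNge dm.
move=> mt; case: (ltnP m (off t)) => h.
  by case: (IH h) => j jt hj; exists j => //; apply: ltnW.
by exists t => //; rewrite h mt.
Qed.

Lemma sc : simplicial_complex Dc.
Proof.
split.
  move=> i; rewrite memD; case: (ltnP i d) => id.
    by rewrite sub1set inE id.
  have : i < off s by rewrite hn.
  case/(find_block id) => j js hj.
  apply/orP; right; apply/existsP; exists (Ordinal js).
  by rewrite sub1set !inE /= hj orbT.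
move=> F G; rewrite !memD => /orP [FB|/existsP [k Fk]] GF.
  by rewrite (subset_trans GF FB).
by apply/orP; right; apply/existsP; exists k; rewrite (subset_trans GF Fk).
Qed.

Lemma mfs : max_face_size Dc d.
Proof.
split.
  by exists Bs; rewrite ?card_Bs // memD subxx.
move=> F; rewrite memD => /orP [FB|/existsP [k Fk]].
  by rewrite -card_Bs subset_leq_card.
apply: leq_trans (subset_leq_card Fk) _.
by rewrite card_Fs // hdd // ltnW.
Qed.

Lemma forest_Dc : forest Dc.
Proof.
move=> S Ssub Sne.
have anti : forall F G, F \in S -> G \in S -> F \subset G -> F = G.
  move=> F G FS GS; apply: facets_anti; exact: (subsetP Ssub).
have ST : forall X, X \in S -> X \in Tset.
  move=> X XS; exact: (subsetP (facets_sub Tset)) _ (subsetP Ssub X XS).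
rewrite /has_leaf /is_leaf (facets_gen_anti anti).
case: (pickP (fun j : 'I_s => Fs j \in S)) => [j0 Hj0 | none].
  case: (@arg_minnP _ j0 (fun j : 'I_s => Fs j \in S) (fun j : 'I_s => e j) Hj0) => j Hj Hmin.
  exists (Fs j); split => //.
  case: (set_0Vmem (S :\ Fs j)) => [H0|[G]].
    left; apply/setP => X; rewrite inE; apply/idP/eqP => [XS|->//].
    apply/eqP; apply: contraT => ne.
    have : X \in S :\ Fs j by rewrite !inE ne.
    by rewrite H0 inE.
  rewrite !inE => /andP [GF GS].
  right; exists G => //; split => // H HS HF.
  apply/subsetP => i /setIP [iH iF].
  have iA : i \in As j.
    case: (memT (ST H HS)) => [HB|[k Hk _]].
      by apply: FsB iF _; move: iH; rewrite HB inE.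
    apply: (FsI (ltn_ord j) (ltn_ord k)) _ _ iF; last by rewrite -Hk.
    apply/eqP => kj; move/eqP: HF; apply; rewrite Hk kj.
    done.
  apply/setIP; split => //.
  case: (memT (ST G GS)) => [GB|[k Gk _]].
    by rewrite GB; apply: (subsetP (As_sub_Bs (ltn_ord j))).
  rewrite Gk inE; apply/orP; left.
  apply: (subsetP (As_mono (Hmin k _))) iA. by rewrite -Gk.
case: (set_0Vmem S) => [S0|[B BS]]; first by move: Sne; rewrite S0 eqxx.
have allB : forall X, X \in S -> X = Bs.
  move=> X XS; case: (memT (ST X XS)) => [//|[k Xk _]].
  by move: (none k); rewrite -Xk XS.
exists Bs; split.
  by rewrite -(allB B BS).
left; apply/setP => X; rewrite inE; apply/idP/eqP => [/allB //|->].
by rewrite -(allB B BS).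
Qed.

Lemma ptw G : (((G \in Dc)%:R : {poly int}) =
  (G \subset Bs)%:R + \sum_(j < s) ((G \subset Fs j)%:R - (G \subset As j)%:R))%R.
Proof.
case: (boolP (G \subset Bs)) => GB.
  have -> : G \in Dc by rewrite memD GB.
  rewrite big1 ?addr0 // => j _.
  have -> : (G \subset Fs j) = (G \subset As j).
    apply/idP/idP => H.
      apply/subsetP => i iG; apply: FsB (subsetP H i iG) _.
      by move: (subsetP GB i iG); rewrite inE.
    exact: subset_trans H (subsetUl _ _).
  by rewrite subrr.
rewrite add0r.
rewrite (eq_bigr (fun j : 'I_s => ((G \subset Fs j)%:R : {poly int})%R)); last first.
  move=> j _.
  have -> : (G \subset As j) = false.
    apply/negbTE; apply: contra GB => GA; exact: subset_trans GA (As_sub_Bs (ltn_ord j)).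
  by rewrite subr0.
case: (boolP (G \in Dc)) => GD.
  move: (GD); rewrite memD (negbTE GB) /= => /existsP [j Gj].
  rewrite (bigD1 j) //= Gj big1 ?addr0 // => k kj.
  have -> : (G \subset Fs k) = false.
    apply/negbTE; apply/negP => Gk; move/negP: GB; apply.
    apply/subsetP => i iG.
    have := FsI (ltn_ord j) (ltn_ord k) kj (subsetP Gk i iG) (subsetP Gj i iG).
    by move/(subsetP (As_sub_Bs (ltn_ord j))).
  by [].
rewrite big1 // => j _.
have -> : (G \subset Fs j) = false.
  apply/negbTE; apply: contra GD => Gj; rewrite memD; apply/orP; right; apply/existsP; exists j.
  done.
by [].
Qed.

Lemma Dc_sum : (\sum_(G : {set 'I_n}) (G \in Dc)%:R * 'X^#|G| =
  (1+'X)^+d + \sum_(j<s) ((1+'X)^+delta j - (1+'X)^+ e j) :> {poly int})%R.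
Proof.
transitivity (\sum_(G : {set 'I_n}) ((G \subset Bs)%:R * 'X^#|G| + \sum_(j < s)
  ((G \subset Fs j)%:R * 'X^#|G| - (G \subset As j)%:R * 'X^#|G|)) : {poly int})%R.
  apply: eq_bigr => G _; rewrite ptw mulrDl mulr_suml; congr (_ + _)%R.
  by apply: eq_bigr => j _; rewrite mulrBl.
rewrite big_split /= exchange_big /= Lsub card_Bs; congr (_ + _)%R.
by apply: eq_bigr => j _; rewrite sumrB !Lsub card_Fs ?card_As.
Qed.

Lemma P1 : (\sum_(i < d.+1) ((fshift Dc i)%:R : int) *: 'X^i =
   \sum_(G : {set 'I_n}) (G \in Dc)%:R * 'X^#|G| :> {poly int})%R.
Proof.
have -> : (\sum_(G : {set 'I_n}) (G \in Dc)%:R * 'X^#|G| = \sum_(G in Dc) 'X^#|G| :> {poly int})%R.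
  rewrite [RHS]big_mkcond; apply: eq_bigr => G _; case: (G \in Dc).
    by rewrite mul1r.
  by rewrite mul0r.
rewrite (partition_big (fun G : {set 'I_n} => (inord #|G| : 'I_d.+1)) predT) //=.
apply: eq_bigr => j _.
have hj : forall G, G \in Dc -> (inord #|G| == j :> 'I_d.+1) = (#|G| == j).
  move=> G GD; rewrite -val_eqE /= inordK // ltnS; by case: mfs => _ ->.
rewrite (eq_bigl (fun G => G \in [set G in Dc | #|G| == j])); last first.
  move=> G; rewrite in_set; case: (boolP (G \in Dc)) => // GD; by rewrite hj.
rewrite (eq_bigr (fun _ => 'X^j)%R); last by move=> G; rewrite inE => /andP [_ /eqP ->].
rewrite sumr_const scaler_nat; congr (_ *+ _)%R.
clear hj; move: j => [[|j'] hj'] //=.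
have -> : [set G in Dc | #|G| == 0] = [set set0].
  apply/setP => G; rewrite in_set in_set1 cards_eq0; apply/andP/eqP => [[_ /eqP]|->] //.
  by split => //; rewrite memD; apply/orP; left; exact: sub0set.
by rewrite cards1.
Qed.

Lemma constr_main : exists D : {set {set 'I_n}},
    [/\ simplicial_complex D, forest D, max_face_size D d &
     (\sum_(i < d.+1) ((fshift D i)%:R : int) *: 'X^i =
      (1+'X)^+d + \sum_(j<s) ((1+'X)^+delta j - (1+'X)^+ e j) :> {poly int})%R].
Proof.
exists Dc; split; [exact: sc | exact: forest_Dc | exact: mfs |].
by rewrite P1 Dc_sum.
Qed.

End Constr.

Unset Implicit Arguments.
Set Strict Implicit.

(* delta j, j = 0..s  stands for delta_{j+1};  e j, j = 0..s-1 for e_{j+1} *)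
Theorem lemma2p3 (s d : nat) (delta e : nat -> nat) :
  1 <= d ->
  (forall i j, i <= s -> j < s -> delta i <> e j) ->
  0 < delta 0 ->
  (forall i, i < s -> delta i <= delta i.+1) ->
  delta s = d ->
  (forall j, j.+1 < s -> e j <= e j.+1) ->
  (0 < s -> e s.-1 < d) ->
  (forall j, j < s -> e j < delta j) ->
  let n := (\sum_(j < s.+1) delta j - \sum_(j < s) e j)%N in
  exists D : {set {set 'I_n}},
    [/\ simplicial_complex D, forest D, max_face_size D d &
     (\sum_(i < d.+1) ((fshift D i)%:R : int) *: 'X^i =
      \sum_(j < s.+1) (1 + 'X) ^+ delta j - \sum_(j < s) (1 + 'X) ^+ e j
        :> {poly int})%R].
Proof.
move=> hd _ _ hmono hds _ _ hde n.
have hdd : forall j, j <= s -> delta j <= d.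
  move=> j js; rewrite -hds.
  have H : forall k, j + k <= s -> delta j <= delta (j + k).
    elim => [|k IH] h; first by rewrite addn0.
    rewrite addnS in h *; apply: leq_trans (IH (ltnW h)) (hmono _ h).
  by have := H (s - j); rewrite subnKC //; apply.
have hn : off d delta e s = n.
  rewrite /n /off big_ord_recr /= hds.
  have -> : \sum_(j < s) delta j = \sum_(j < s) (delta j - e j) + \sum_(j < s) e j.
    rewrite -big_split; apply: eq_bigr => j _ /=. exact/esym/subnK/ltnW/hde.
  set X := \sum_(j < s) (delta j - e j); set Y := \sum_(j < s) e j.
  by rewrite addnAC addnK addnC.
have [D [h1 h2 h3 h4]] := constr_main hde hdd hn.
exists D; split => //; rewrite h4.
rewrite [in RHS]big_ord_recr /= hds sumrB.
set P := ((1 + 'X) ^+ d)%R.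
by rewrite addrA (addrC P).
Qed.
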